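(* Let $\mathcal{G}$ be a reaction network with species $X_1,\dots,X_n$, $n\ge2$, and let $\tilde{\mathcal{G}}$ be its homeostasis-associated reaction network. Suppose that for every choice of $n$ distinct reactions $\mathbf{y}_1\to\mathbf{y}'_1,\dots,\mathbf{y}_n\to\mathbf{y}'_n$ of $\tilde{\mathcal{G}}$, $$\det(\mathbf{y}_1,\dots,\mathbf{y}_n)\,\det(\mathbf{y}'_1-\mathbf{y}_1,\dots,\mathbf{y}'_n-\mathbf{y}_n)=0.$$ Then for every choice of positive rate constants $\mathbf{k}$ for $\mathcal{G}$, $\det B(\mathbf{x},\mathbf{k})=0$ for all $\mathbf{x}\in\mathbb{R}^n_{>0}$, where $B$ is the Jacobian $D_{\mathbf{x}}\mathbf{f}(\mathbf{x},\mathbf{k})$ of $\mathcal{G}$ with first row and last column deleted. Consequently, the mass-action input–output system of $\mathcal{G}$ (input $X_1$, output $X_n$) exhibits perfect homeostasis at every linearly stable positive equilibrium: if $(\tilde{\mathbf{x}},\tilde\zeta)$ is such an equilibrium and $\zeta\mapsto\mathbf{x}(\zeta)$ is the smooth branch of equilibria with $\mathbf{x}(\tilde\zeta)=\tilde{\mathbf{x}}$ given by the implicit function theorem, then $\frac{d x_n}{d\zeta}(\zeta)=0$ for all $\zeta$ in a neighbourhood of $\tilde\zeta$.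
   Context: A reaction network with species $X_1,\dots,X_n$ is a finite set of reactions $\mathbf{y}\to\mathbf{y}'$ with $\mathbf{y}\ne\mathbf{y}'\in\mathbb{Z}^n_{\ge0}$. Given positive rate constants $\mathbf{k}$, the mass-action vector field is $\mathbf{f}(\mathbf{x},\mathbf{k})=\sum_{\mathbf{y}\to\mathbf{y}'}k_{\mathbf{y}\to\mathbf{y}'}\mathbf{x}^{\mathbf{y}}(\mathbf{y}'-\mathbf{y})$ on $\mathbb{R}^n_{>0}$. Homeostasis-associated network $\tilde{\mathcal{G}}$ of $\mathcal{G}$: Step 1: replace each reaction $\mathbf{y}\to\mathbf{y}'$ of $\mathcal{G}$ by $\mathbf{y}\to\hat{\mathbf{y}}'$, where $\hat y'_1=y_1$ and $\hat y'_i=y'_i$ for $i\ge2$; reactions that become trivial are discarded and coinciding reactions are identified. Step 2: add the reaction $X_n\to X_1$. Input–output system: $\dot{\mathbf{x}}=\mathbf{f}(\mathbf{x},\mathbf{k})+\zeta\mathbf{e}_1$ with parameter $\zeta$, input $x_1$, output $x_n$. An equilibrium is linearly stable if all eigenvalues of the Jacobian there have negative real part. Perfect homeostasis means the derivative of the input–output function $\zeta\mapsto x_n(\zeta)$ along the equilibrium branch vanishes on an entire interval. *)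

(* Defs.v *)
From HB Require Import structures.
From mathcomp Require Import all_boot all_order all_algebra.
From mathcomp Require Import all_classical all_reals all_analysis.
From mathcomp Require Import complex.

Set Implicit Arguments.
Unset Strict Implicit.
Unset Printing Implicit Defensive.

Import Order.TTheory GRing.Theory Num.Theory.
Import numFieldNormedType.Exports.
Local Open Scope ring_scope.

(** Complexes (vectors in Z^n_{>=0}) over species X_1..X_n, indexed by 'I_n;
    species X_1 is [ord0] and species X_n is [ord_max]. *)
Definition cplx (n : nat) := {ffun 'I_n -> nat}.

Definition reaction (n : nat) := (cplx n * cplx n)%type.

Definition is_network (n : nat) (G : seq (reaction n)) : Prop :=
  uniq G /\ (forall r, r \in G -> r.1 != r.2).

Definition monom (R : pzRingType) (n : nat) (x : 'rV[R]_n) (y : cplx n) : R :=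
  \prod_(i < n) x 0 i ^+ y i.

Definition rvec (R : pzRingType) (n : nat) (r : reaction n) : 'rV[R]_n :=
  \row_i ((r.2 i)%:R - (r.1 i)%:R).

Definition massaction (R : pzRingType) (n : nat) (G : seq (reaction n))
  (k : reaction n -> R) (x : 'rV[R]_n) : 'rV[R]_n :=
  \sum_(r <- G) (k r * monom x r.1) *: rvec R r.

(** Jacobian matrix D_x F (x) in the usual convention: entry (i, j) is the
    partial derivative of F_i with respect to x_j.  The library's
    [derive.jacobian F x] (= lin1_mx ('d F x)) acts on row vectors
    (v *m 'J F x = 'd F x v), so it is the transpose of D_x F. *)
Definition Dx (R : realType) (n : nat) (F : 'rV[R]_n -> 'rV[R]_n)
  (x : 'rV[R]_n) : 'M[R]_n := (jacobian F x)^T.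

Definition delete_first_row_last_col (R : Type) (m : nat) (A : 'M[R]_m.+1)
  : 'M[R]_m := row' ord0 (col' ord_max A).

Definition unitc (n : nat) (i : 'I_n) : cplx n := [ffun j => (j == i) : nat].

Definition hat_reaction (m : nat) (r : reaction m.+1) : reaction m.+1 :=
  (r.1, [ffun i => if i == ord0 then r.1 i else r.2 i]).

Definition homeo_network (m : nat) (G : seq (reaction m.+1))
  : seq (reaction m.+1) :=
  undup ([seq r <- map (@hat_reaction m) G | r.1 != r.2]
         ++ [:: (unitc ord_max, unitc ord0)]).

Definition det_cols (R : pzRingType) (n : nat) (v : 'I_n -> 'rV[R]_n) : R :=
  \det (\matrix_(i, j) v j 0 i).

Definition cplx_vec (R : pzRingType) (n : nat) (y : cplx n) : 'rV[R]_n :=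
  \row_i (y i)%:R.

Definition linearly_stable (R : realType) (n : nat) (J : 'M[R]_n) : Prop :=
  forall z : complex.complex R,
    eigenvalue (map_mx (fun a : R => complex.Complex a 0) J) z ->
    complex.Re z < 0.

(* Main.v *)
Require Import Defs.
From HB Require Import structures.
From mathcomp Require Import all_boot all_order all_algebra.
From mathcomp Require Import all_classical all_reals all_analysis.
From mathcomp Require Import complex.
From mathcomp Require Import all_fingroup.
From mathcomp Require Import ring lra.
Import Order.TTheory GRing.Theory Num.Theory.
Import numFieldNormedType.Exports.
Local Open Scope ring_scope.

Module Aux.
Set Implicit Arguments. Unset Strict Implicit.
Lemma det_sum_rank1 (R : numFieldType) (n N : nat) (a : 'I_N -> R)
  (u w : 'I_N -> 'rV[R]_n) :
  (forall s : 'I_n -> 'I_N,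
     det_cols (fun j => u (s j)) * det_cols (fun j => w (s j)) = 0) ->
  \det (\matrix_(i, j) \sum_(t < N) a t * u t 0 i * w t 0 j) = 0.
Proof.
move=> H.
pose W (s : {ffun 'I_n -> 'I_N}) : 'M[R]_n := \matrix_(i, j) w (s i) 0 j.
pose U (s : {ffun 'I_n -> 'I_N}) : 'M[R]_n := \matrix_(i, j) u (s i) 0 j.
pose F (s : {ffun 'I_n -> 'I_N}) :=
  (\prod_i a (s i)) * (\prod_i u (s i) 0 i) * \det (W s).
have E1 : \det (\matrix_(i, j) \sum_(t < N) a t * u t 0 i * w t 0 j)
          = \sum_s F s.
  rewrite /determinant.
  under eq_bigr => sg _.
    rewrite (eq_bigr (fun i => \sum_(t < N) a t * u t 0 i * w t 0 (sg i)));
      last by move=> i _; rewrite mxE.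
    rewrite bigA_distr_bigA big_distrr /=.
    over.
  rewrite exchange_big /=; apply: eq_bigr => s _.
  rewrite /F /W /determinant big_distrr /=; apply: eq_bigr => sg _.
  rewrite !big_split /= mulrCA; congr (_ * _).
  by congr (_ * _); apply: eq_bigr => i _; rewrite mxE.
pose cmp (t : {perm 'I_n}) (s : {ffun 'I_n -> 'I_N}) : {ffun 'I_n -> 'I_N} :=
  [ffun i => s (t i)].
have cmp_inj t : injective (cmp t).
  move=> s1 s2 e; apply/ffunP => i.
  have := congr1 (fun f : {ffun 'I_n -> 'I_N} => f (t^-1%g i)) e.
  by rewrite /cmp !ffunE permKV.
have E2 t : \sum_s F s = \sum_s F (cmp t s).
  exact: reindex_inj (cmp_inj t).
have E3 t s : F (cmp t s) = (-1) ^+ t *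
   ((\prod_i a (s i)) * (\prod_i u (s (t i)) 0 i) * \det (W s)).
  rewrite /F; have -> : \prod_i a (cmp t s i) = \prod_i a (s i).
    by rewrite [RHS](reindex_perm t); apply: eq_bigr => i _; rewrite /cmp ffunE.
  have -> : \prod_i u (cmp t s i) 0 i = \prod_i u (s (t i)) 0 i.
    by apply: eq_bigr => i _; rewrite /cmp ffunE.
  have -> : W (cmp t s) = row_perm t (W s).
    by apply/matrixP => i j; rewrite /W !mxE /cmp ffunE.
  rewrite row_permE det_mulmx det_perm.
  by rewrite mulrCA.
have E4 (s : {ffun 'I_n -> 'I_N}) : \sum_(t : {perm 'I_n}) (-1) ^+ t *
   ((\prod_i a (s i)) * (\prod_i u (s (t i)) 0 i) * \det (W s)) = 0.
  have : det_cols (fun j => u (s j)) * det_cols (fun j => w (s j)) = 0 by exact: H.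
  have ->: det_cols (fun j => w (s j)) = \det (W s).
    by rewrite /det_cols -det_tr; congr (\det _); apply/matrixP => i j; rewrite !mxE.
  have ->: det_cols (fun j => u (s j)) =
     \sum_(t : {perm 'I_n}) (-1) ^+ t * \prod_i u (s (t i)) 0 i.
    rewrite /det_cols /determinant; apply: eq_bigr => t _; congr (_ * _).
    apply: eq_bigr => i _.
    by rewrite mxE.
  move=> H0.
  transitivity ((\prod_i a (s i)) * ((\sum_(t : {perm 'I_n}) (-1) ^+ t * \prod_i u (s (t i)) 0 i) * \det (W s))); last by rewrite H0 mulr0.
  rewrite big_distrl big_distrr /=.
  apply: eq_bigr => t _.
  by rewrite !mulrA; congr (_ * _); rewrite [_ * (-1) ^+ _]mulrC.
have : (\sum_s F s) *+ #|{perm 'I_n}| = 0.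
  rewrite -sumr_const (eq_bigr _ (fun t _ => E2 t)) exchange_big /=.
  by rewrite big1 // => s _; rewrite (eq_bigr _ (fun t _ => E3 t s)) E4.
move/eqP; rewrite mulrn_eq0 => /orP[|/eqP]; last by rewrite E1.
have h : (0 < #|{perm 'I_n}|)%N by apply/card_gt0P; exists 1%g.
by move=> /eqP e; rewrite e in h.
Qed.

Section D.
Variable R : realType.

Lemma is_derive_shiftX (a : R) (p : nat) :
  is_derive (0:R) (1:R) (fun t : R => (t + a) ^+ p) (p%:R * a ^+ p.-1).
Proof.
have h1 : is_derive (0:R) (1:R) (fun t : R => t + a) 1.
  rewrite -[X in is_derive _ _ _ X](addr0 1).
  apply: is_deriveD.
have := is_deriveX p h1.
rewrite add0r [_%:A]mulr1 => H.
by rewrite exprfctE in H.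
Qed.

Lemma is_derive_polysum (I : Type) (s : seq I) (c : I -> R) (p : I -> nat) (a : R) :
  is_derive (0:R) (1:R) (fun t : R => \sum_(r <- s) c r * (t + a) ^+ p r)
    (\sum_(r <- s) c r * ((p r)%:R * a ^+ (p r).-1)).
Proof.
elim: s => [|r s IH].
  have -> : (fun t : R => \sum_(r <- [::]) c r * (t + a) ^+ p r) = cst 0.
    by apply: funext => t; rewrite big_nil.
  rewrite big_nil; exact: is_derive_cst.
have -> : (fun t : R => \sum_(r0 <- r :: s) c r0 * (t + a) ^+ p r0) =
  (c r *: (fun t : R => (t + a) ^+ p r)) + (fun t : R => \sum_(r <- s) c r * (t + a) ^+ p r).
  by apply: funext => t; rewrite big_cons.
rewrite big_cons.
have := is_deriveD (is_deriveZ (c r) (is_derive_shiftX a (p r))) IH.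
by [].
Qed.

Lemma diff_prodX (n : nat) (y : cplx n) (x : 'rV[R]_n) (s : seq 'I_n) :
  differentiable (fun x : 'rV[R]_n => \prod_(i <- s) x 0 i ^+ y i) x.
Proof.
elim: s => [|i s IH].
  have -> : (fun x : 'rV[R]_n => \prod_(i <- [::]) x 0 i ^+ y i) = cst 1.
    by apply: funext => z; rewrite big_nil.
  exact: differentiable_cst.
have -> : (fun x : 'rV[R]_n => \prod_(j <- i :: s) x 0 j ^+ y j) =
  (fun x : 'rV[R]_n => x 0 i ^+ y i) * (fun x : 'rV[R]_n => \prod_(j <- s) x 0 j ^+ y j).
  by apply: funext => z; rewrite big_cons.
apply: differentiableM => //.
case: (y i) => [|k].
  have -> : (fun x : 'rV[R]_n => x 0 i ^+ 0) = cst 1 by apply: funext => z.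
  exact: differentiable_cst.
have -> : (fun x : 'rV[R]_n => x 0 i ^+ k.+1) = (fun x : 'rV[R]_n => x 0 i) ^+ k.+1.
  by rewrite exprfctE.
apply: differentiableX; exact: differentiable_coord.
Qed.

Lemma diff_massaction (n : nat) (G : seq (reaction n)) (k : reaction n -> R)
  (x : 'rV[R]_n) : differentiable (massaction G k) x.
Proof.
rewrite /massaction.
elim: G => [|r G IH].
  have -> : (fun x : 'rV[R]_n => \sum_(r <- [::]) (k r * monom x r.1) *: rvec R r) = cst 0.
    by apply: funext => z; rewrite big_nil.
  exact: differentiable_cst.
have -> : (fun x : 'rV[R]_n => \sum_(r0 <- r :: G) (k r0 * monom x r0.1) *: rvec R r0) =
  (fun x : 'rV[R]_n => (k r * monom x r.1) *: rvec R r) +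
  (fun x : 'rV[R]_n => \sum_(r0 <- G) (k r0 * monom x r0.1) *: rvec R r0).
  by apply: funext => z; rewrite big_cons.
apply: differentiableD => //.
apply: differentiableZl.
have -> : (fun x : 'rV[R]_n => k r * monom x r.1) =
  cst (k r) * (fun x : 'rV[R]_n => \prod_(i <- index_enum 'I_n) x 0 i ^+ r.1 i).
  by apply: funext => z.
apply: differentiableM; first exact: differentiable_cst.
exact: diff_prodX.
Qed.

Lemma derive_line (n : nat) (f : 'rV[R]_n -> 'rV[R]_n) (x v : 'rV[R]_n) :
  'D_v f x = 'D_1 (fun h : R => f (h *: v + x)) 0.
Proof.
rewrite /derive /=.
congr lim.
by rewrite scale0r add0r; under [in RHS]eq_fun do rewrite addr0 [_%:A]mulr1.
Qed.

Definition Pd {n : nat} (y : cplx n) (j : 'I_n) (x : 'rV[R]_n) : R :=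
  (y j)%:R * \prod_i x 0 i ^+ (y i - (i == j))%N.

Lemma Dx_entry (n : nat) (G : seq (reaction n)) (k : reaction n -> R)
  (x : 'rV[R]_n) (i j : 'I_n) :
  Dx (massaction G k) x i j = \sum_(r <- G) k r * Pd r.1 j x * rvec R r 0 i.
Proof.
have dF := diff_massaction G k x.
rewrite /Dx /jacobian mxE /lin1_mx mxE -(deriveE _ dF) derive_line.
have dl : derivable (fun h : R => massaction G k (h *: 'e_j + x)) 0 1 := (derivable1P _ _ _).1 (@diff_derivable _ _ _ _ _ 'e_j dF).
rewrite (derive_mx dl) mxE.
pose c (r : reaction n) := \prod_(l < n | l != j) x 0 l ^+ r.1 l.
have E : (fun t : R => massaction G k (t *: 'e_j + x) 0 i) =
  (fun t : R => \sum_(r <- G) (k r * rvec R r 0 i * c r) * (t + x 0 j) ^+ r.1 j).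
  apply: funext => t; rewrite /massaction summxE; apply: eq_bigr => r _.
  rewrite mxE /monom (bigD1 j) //= !mxE eqxx /= eqxx mulr1.
  rewrite (eq_bigr (fun l => x 0 l ^+ r.1 l)); last first.
    by move=> l /negbTE lj; rewrite !mxE lj mulr0 add0r.
  by rewrite /c; ring.
rewrite E (@derive_val _ _ _ _ _ _ _ (is_derive_polysum _ _ _ _)).
apply: eq_bigr => r _.
rewrite /Pd (bigD1 j) //= eqxx subn1.
rewrite (eq_bigr (fun l => x 0 l ^+ r.1 l)); last first.
  by move=> l /negbTE lj; rewrite lj subn0.
by rewrite /c; ring.
Qed.

Lemma Pd_div (n : nat) (y : cplx n) (j : 'I_n) (x : 'rV[R]_n) :
  x 0 j != 0 -> Pd y j x = monom x y * ((y j)%:R / x 0 j).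
Proof.
move=> xj.
rewrite /Pd /monom (bigD1 j) //= [in RHS](bigD1 j) //= eqxx.
rewrite (eq_bigr (fun l => x 0 l ^+ y l)); last first.
  by move=> l /negbTE lj; rewrite lj subn0.
case: (y j) => [|p]; first by rewrite /= !mul0r mulr0.
rewrite subn1 /= exprS.
by field.
Qed.

Lemma det_zero_col (n : nat) (A : 'M[R]_n) (j : 'I_n) :
  (forall i, A i j = 0) -> \det A = 0.
Proof.
move=> h; rewrite (expand_det_col _ j) big1 // => i _; by rewrite h mul0r.
Qed.

Lemma part1 (m : nat) (G : seq (reaction m.+2)) :
  (forall s : 'I_m.+2 -> reaction m.+2,
      injective s -> (forall j, s j \in homeo_network G) ->
      det_cols (fun j => cplx_vec R (s j).1) *
      det_cols (fun j => rvec R (s j)) = 0) ->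
  forall (k : reaction m.+2 -> R) (x : 'rV[R]_m.+2), (forall i, 0 < x 0 i) ->
  \det (delete_first_row_last_col (Dx (massaction G k) x)) = 0.
Proof.
move=> H k x xpos.
have xnz i : x 0 i != 0 by rewrite gt_eqF.
pose ex : reaction m.+2 := (unitc ord_max, unitc ord0).
pose L := rcons [seq (k r * monom x r.1, hat_reaction r) | r <- G] (1, ex).
pose d : R * reaction m.+2 := (0, ex).
pose a (t : 'I_(size L)) := (nth d L t).1.
pose rho (t : 'I_(size L)) := (nth d L t).2.
pose u t := rvec R (rho t).
pose w (t : 'I_(size L)) : 'rV[R]_m.+2 := \row_j (((rho t).1 j)%:R / x 0 j).
have Hrho t : ((rho t).1 == (rho t).2) || (rho t \in homeo_network G).
  have : nth d L t \in L := mem_nth d (ltn_ord t).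
  rewrite /rho; case: (nth d L t) => a0 r0 /=.
  rewrite mem_rcons inE => /orP[/eqP [_ ->]|/mapP [r rG [_ ->]]].
    by apply/orP; right; rewrite /homeo_network mem_undup mem_cat inE eqxx orbT.
  case e: (_ == _) => //=.
  by rewrite /homeo_network mem_undup mem_cat mem_filter e map_f.
have Hs : forall s : 'I_m.+2 -> 'I_(size L),
    det_cols (fun j => u (s j)) * det_cols (fun j => w (s j)) = 0.
  move=> s.
  case: (boolP [exists j, ((rho (s j)).1 == (rho (s j)).2)]) => [/existsP [j hj] | hn].
    rewrite /det_cols (@det_zero_col _ _ j) ?mul0r // => i.
    by rewrite mxE /u /rvec mxE (eqP hj) subrr.
  have Hin j : rho (s j) \in homeo_network G.
    have := Hrho (s j); case/orP => // hj.
    by move: hn; rewrite negb_exists => /forallP /(_ j); rewrite hj.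
  case: (boolP [forall j1, forall j2, (rho (s j1) == rho (s j2)) ==> (j1 == j2)]) => [Hf | Hn].
    have inj : injective (fun j => rho (s j)).
      move=> j1 j2 e; move/forallP: Hf => /(_ j1) /forallP /(_ j2) /implyP.
      by rewrite e eqxx => /(_ isT) /eqP.
    have := H _ inj Hin.
    have -> : det_cols (fun j => w (s j)) =
        (\prod_i (x 0 i)^-1) * det_cols (fun j => cplx_vec R (rho (s j)).1).
      rewrite (eq_bigr (fun i => (\row_i (x 0 i)^-1 : 'rV[R]_m.+2) 0 i)); last by move=> i _; rewrite mxE.
      rewrite /det_cols -det_diag -det_mulmx mul_diag_mx.
      congr (\det _); apply/matrixP => i j; rewrite !mxE; by rewrite mulrC.
    move=> h; rewrite mulrCA /u.
    by rewrite [X in _ * X]mulrC h mulr0.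
  move: Hn; rewrite negb_forall => /existsP [j1]; rewrite negb_forall => /existsP [j2].
  rewrite negb_imply => /andP [/eqP e ne].
  rewrite /det_cols -det_tr (determinant_alternate ne) ?mul0r // => i.
  by rewrite !mxE /u e.
have HD := @det_sum_rank1 R _ _ a u w Hs.
set Dt := \matrix_(i, j) _ in HD.
have Ent i j : Dt i j = \sum_(r <- G) (k r * monom x r.1) * rvec R (hat_reaction r) 0 i
     * ((r.1 j)%:R / x 0 j) + 1 * rvec R ex 0 i * ((ex.1 j)%:R / x 0 j).
  rewrite /Dt mxE.
  have -> : \sum_(t < size L) a t * u t 0 i * w t 0 j =
     \sum_(p <- L) p.1 * rvec R p.2 0 i * ((p.2.1 j)%:R / x 0 j).
    by rewrite (big_nth d) big_mkord; apply: eq_bigr => t _; rewrite /w !mxE.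
  by rewrite /L big_rcons big_map.
have row0 j : Dt ord0 j = (j == ord_max)%:R / x 0 j.
  rewrite Ent big1 ?add0r; last first.
    move=> r _; rewrite /rvec !mxE /hat_reaction /= ffunE eqxx subrr.
    by rewrite mulr0 mul0r.
  rewrite /rvec !mxE /ex /unitc /= !ffunE eqxx /=.
  by rewrite subr0 !mul1r.
have rest i j : i != ord0 -> j != ord_max ->
    Dt i j = Dx (massaction G k) x i j.
  move=> i0 jm.
  rewrite Ent Dx_entry /ex /unitc /= ffunE (negbTE jm) /= mul0r mulr0 addr0.
  apply: eq_bigr => r _.
  rewrite Pd_div // /rvec !mxE /hat_reaction /= ffunE (negbTE i0).
  by ring.
clearbody Dt; move: HD; rewrite (expand_det_row _ ord0) (bigD1 ord_max) //= big1; last first.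
  by move=> j /negbTE jm; rewrite row0 jm /= !mul0r.
rewrite addr0 row0 eqxx /cofactor.
have -> : row' ord0 (col' ord_max Dt) = delete_first_row_last_col (Dx (massaction G k) x).
  apply/matrixP => i j; rewrite /delete_first_row_last_col !mxE rest //.
    by rewrite /Dx /jacobian /lin1_mx !mxE.
  by rewrite eq_sym neq_lift.
move/eqP; rewrite !mulf_eq0 invr_eq0 (negbTE (xnz _)) signr_eq0 /=.
by rewrite oner_eq0 /= => /eqP.
Qed.

Lemma cont_sum (t0 : R) (I : Type) (s : seq I) (f : I -> R -> R) :
  (forall i, {for t0, continuous (f i)}) ->
  {for t0, continuous (fun t => \sum_(i <- s) f i t)}.
Proof.
move=> h; elim: s => [|i s IH].
  have -> : (fun t => \sum_(i <- [::]) f i t) = cst 0.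
    by apply: funext => t; rewrite big_nil.
  exact: cst_continuous.
have -> : (fun t => \sum_(j <- i :: s) f j t) = f i + (fun t => \sum_(j <- s) f j t).
  by apply: funext => t; rewrite big_cons.
exact: continuousD.
Qed.

Lemma cont_prod (t0 : R) (I : Type) (s : seq I) (f : I -> R -> R) :
  (forall i, {for t0, continuous (f i)}) ->
  {for t0, continuous (fun t => \prod_(i <- s) f i t)}.
Proof.
move=> h; elim: s => [|i s IH].
  have -> : (fun t => \prod_(i <- [::]) f i t) = cst 1.
    by apply: funext => t; rewrite big_nil.
  exact: cst_continuous.
have -> : (fun t => \prod_(j <- i :: s) f j t) = f i \* (fun t => \prod_(j <- s) f j t).
  by apply: funext => t; rewrite big_cons.
exact: continuousM.
Qed.

Lemma cont_X (t0 : R) (f : R -> R) (p : nat) :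
  {for t0, continuous f} -> {for t0, continuous (fun t => f t ^+ p)}.
Proof.
move=> h.
have -> : (fun t => f t ^+ p) = (fun t => \prod_(i < p) f t).
  by apply: funext => t; rewrite prodr_const card_ord.
by apply: cont_prod => i.
Qed.

Lemma cont_det (t0 : R) (n : nat) (A : R -> 'M[R]_n) :
  (forall i j, {for t0, continuous (fun t => A t i j)}) ->
  {for t0, continuous (fun t => \det (A t))}.
Proof.
move=> h.
have -> : (fun t => \det (A t)) = (fun t => \sum_(s : 'S_n) (-1) ^+ s * \prod_i A t i (s i)).
  by apply: funext => t.
apply: cont_sum => s.
have -> : (fun t => (-1) ^+ s * \prod_i A t i (s i)) =
  cst ((-1) ^+ s) \* (fun t => \prod_i A t i (s i)) by [].
apply: continuousM; first exact: cst_continuous.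
by apply: cont_prod.
Qed.

Lemma cont_Dx (n : nat) (G : seq (reaction n)) (k : reaction n -> R)
  (X : R -> 'rV[R]_n) (t0 : R) :
  {for t0, continuous X} ->
  {for t0, continuous (fun t => \det (Dx (massaction G k) (X t)))}.
Proof.
move=> hX; apply: cont_det => i j.
have hc l : {for t0, continuous (fun t => X t 0 l)}.
  apply: (@continuous_comp _ _ _ X (fun M : 'rV[R]_n => M 0 l)) => //.
  exact: coord_continuous.
have -> : (fun t => Dx (massaction G k) (X t) i j) =
   (fun t => \sum_(r <- G) k r * Pd r.1 j (X t) * rvec R r 0 i).
  by apply: funext => t; rewrite Dx_entry.
apply: cont_sum => r.
have -> : (fun t => k r * Pd r.1 j (X t) * rvec R r 0 i) =
  cst (k r * (r.1 j)%:R * rvec R r 0 i) \*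
    (fun t => \prod_l X t 0 l ^+ (r.1 l - (l == j))%N).
  by apply: funext => t; rewrite /Pd /=; ring.
apply: continuousM; first exact: cst_continuous.
apply: cont_prod => l; exact: cont_X.
Qed.

Lemma stab_det (n : nat) (J : 'M[R]_n) : linearly_stable J -> \det J != 0.
Proof.
move=> st; apply/negP => /eqP dJ.
have h : \det (map_mx (fun a : R => complex.Complex a 0) J) == 0.
  have -> : map_mx (fun a : R => complex.Complex a 0) J = map_mx (real_complex R) J by [].
  by rewrite det_map_mx dJ rmorph0.
have E : eigenvalue (map_mx (fun a : R => complex.Complex a 0) J) 0.
  apply/eigenvalueP; case/det0P: h => v v0 vJ; exists v => //.
  by rewrite vJ scale0r.
by have := st 0 E; rewrite /= ltxx.
Qed.

Lemma part2 (m : nat) (G : seq (reaction m.+2)) (k : reaction m.+2 -> R) :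
  (forall x : 'rV[R]_m.+2, (forall i, 0 < x 0 i) ->
     \det (delete_first_row_last_col (Dx (massaction G k) x)) = 0) ->
  (forall (xt : 'rV[R]_m.+2) (zt : R),
     (forall i, 0 < xt 0 i) ->
     massaction G k xt + zt *: delta_mx 0 ord0 = 0 ->
     linearly_stable (Dx (massaction G k) xt) ->
     forall X : R -> 'rV[R]_m.+2,
       X zt = xt ->
       (exists2 e : R, 0 < e & forall z : R, `|z - zt| < e ->
          derivable X z 1 /\ massaction G k (X z) + z *: delta_mx 0 ord0 = 0) ->
       exists2 d : R, 0 < d & forall z : R, `|z - zt| < d ->
          is_derive z 1 (fun t => X t 0 ord_max) 0).
Proof.
move=> P1 xt zt xpos _ st X Xzt [e e0 he].
pose F := massaction G k.
have dXt : derivable X zt 1 by case: (he zt) => //; rewrite subrr normr0.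
have cX : {for zt, continuous X}.
  by apply: differentiable_continuous; apply/derivable1_diffP.
have N1 : \forall z \near zt, `|z - zt| < e.
  apply/nbhs_normP; exists e => // z /=; by rewrite distrC.
have N2 : \forall z \near zt, forall i, 0 < X z 0 i.
  apply: (@filter_forall R _ (fun i z => 0 < X z 0 i) (nbhs zt) _) => i.
  have ci : {for zt, continuous (fun z => X z 0 i)}.
    apply: (@continuous_comp _ _ _ X (fun M : 'rV[R]_m.+2 => M 0 i)) => //.
    exact: coord_continuous.
  by apply: (cvgr_gt _ ci); rewrite Xzt xpos.
have N3 : \forall z \near zt, \det (Dx F (X z)) != 0.
  apply: (cvgr_neq0 _ (cont_Dx (G:=G) (k:=k) cX)).
  by rewrite Xzt; apply: stab_det.
have : \forall z \near zt, [/\ `|z - zt| < e, (forall i, 0 < X z 0 i) & \det (Dx F (X z)) != 0].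
  by near=> z; split; near: z.
case/nbhs_normP => d d0 hd.
exists d => // z hz.
have [ze Xpos dnz] : [/\ `|z - zt| < e, (forall i, 0 < X z 0 i) & \det (Dx F (X z)) != 0].
  by apply: hd => /=; rewrite distrC.
have [dXz _] := he z ze.
have dXd : differentiable X z by apply/derivable1_diffP.
have dF : differentiable F (X z) := diff_massaction G k (X z).
pose c : 'rV[R]_m.+2 := delta_mx 0 ord0.
pose dX := 'D_1 X z.
have Hnear : \forall u \near z, F (X u) + u *: c = cst 0 u.
  apply/nbhs_normP; exists (e - `|z - zt|); first by rewrite /= subr_gt0.
  move=> u /= hu; have hu2 : `|u - zt| < e.
    have := ler_distD z u zt; rewrite (distrC u z); lra.
  by have [] := he u hu2.
have D0 : 'D_1 (fun u => F (X u) + u *: c) z = 0.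
  by rewrite (near_eq_derive _ Hnear) derive_cst.
have dFX : differentiable (F \o X) z by apply: differentiable_comp.
have DC : 'D_1 (fun u => F (X u)) z = dX *m jacobian F (X z).
  rewrite (deriveE _ dFX) (diff_comp dXd dF) /= -(deriveE _ dXd) -/dX.
  by rewrite -(deriveEjacobian _ dF) (deriveE _ dF).
have dL : differentiable (fun u : R => u *: c) z.
  exact: ex_diff.
have DL : 'D_1 (fun u : R => u *: c) z = c.
  by rewrite (deriveE _ dL) diff_val scale1r.
have eq0 : dX *m jacobian F (X z) + c = 0.
  rewrite -DC -DL -D0; apply/esym; apply: deriveD.
    exact: diff_derivable.
  exact: diff_derivable.
set D := Dx F (X z).
have eq1 : D *m dX^T = - c^T.
  have : (dX *m jacobian F (X z))^T = (- c)^T by rewrite -(addrK c (_ *m _)) eq0 add0r.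
  by rewrite trmx_mul linearN.
have eq2 : (\det D) *: dX^T = - (\adj D *m c^T).
  by rewrite -mulmxN -eq1 mulmxA mul_adj_mx mul_scalar_mx.
have e3 : \det D * dX 0 ord_max = 0.
  have := congr1 (fun M : 'cV[R]_m.+2 => M ord_max 0) eq2.
  rewrite /= !mxE => ->.
  rewrite (bigD1 ord0) //= big1; last first.
    by move=> l /negbTE l0; rewrite !mxE l0 andbF mulr0.
  rewrite !mxE !eqxx /= mulr1 addr0.
  have := P1 (X z) Xpos; rewrite /delete_first_row_last_col /cofactor -/F -/D => ->.
  by rewrite mulr0 oppr0.
have e4 : dX 0 ord_max = 0.
  by move/eqP: e3; rewrite mulf_eq0 (negbTE dnz) /= => /eqP.
have dXc : derivable (fun t => X t 0 ord_max) z 1.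
  by move/derivable_mxP: dXz; apply.
apply: DeriveDef => //.
by rewrite -e4 /dX (derive_mx dXz) mxE.
Unshelve. all: by end_near.
Qed.

End D.

End Aux.
Import Aux.

Theorem mainTheorem3 (R : realType) (m : nat) (G : seq (reaction m.+2)) :
  is_network G ->
  (forall s : 'I_m.+2 -> reaction m.+2,
      injective s -> (forall j, s j \in homeo_network G) ->
      det_cols (fun j => cplx_vec R (s j).1) *
      det_cols (fun j => rvec R (s j)) = 0) ->
  forall k : reaction m.+2 -> R, (forall r, r \in G -> 0 < k r) ->
  (forall x : 'rV[R]_m.+2, (forall i, 0 < x 0 i) ->
     \det (delete_first_row_last_col (Dx (massaction G k) x)) = 0)
  /\
  (forall (xt : 'rV[R]_m.+2) (zt : R),
     (forall i, 0 < xt 0 i) ->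
     massaction G k xt + zt *: delta_mx 0 ord0 = 0 ->
     linearly_stable (Dx (massaction G k) xt) ->
     forall X : R -> 'rV[R]_m.+2,
       X zt = xt ->
       (exists2 e : R, 0 < e & forall z : R, `|z - zt| < e ->
          derivable X z 1 /\ massaction G k (X z) + z *: delta_mx 0 ord0 = 0) ->
       exists2 d : R, 0 < d & forall z : R, `|z - zt| < d ->
          is_derive z 1 (fun t => X t 0 ord_max) 0).
Proof.
move=> Hnet H k kpos; split.
  by move=> x xpos; apply: (Aux.part1 H).
by apply: Aux.part2 => x xpos; apply: (Aux.part1 H).
Qed.
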